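(* Let $\xi$ be a DoS sequence that is not an edge case, and let $\hat{B}_d(t)$ and $\hat{B}_f(t)$ be generated by the DoS estimator with parameters $2\leqslant \ell\in\mathbb{N}_+$, $0<\epsilon_0<1$, $0<\theta<1$. Then there exists a finite $T\geqslant 0$ such that $\hat{B}_d(t)\in\mathcal{D}(\xi)$ and $\hat{B}_f(t)\in\mathcal{F}(\xi)$ for all $t\geqslant T$.
   Context: A DoS sequence $\xi=\{H_n\}$ is a finite or infinite sequence of sets $H_n := \{h_n\}\cup[h_n,h_n+\tau_n)$, where $h_1\geqslant 0$, $\tau_n\geqslant 0$ and $h_{n+1} > h_n+\tau_n$ for all $n$. If $\xi$ has only $m$ elements, the convention $h_{n}=h_{n}+\tau_{n}=+\infty$ for $n>m$ is used. For $0\leqslant \tau\leqslant s$ let $\Xi(\tau,s) := \bigcup_n H_n\cap[\tau,s]$ and $n_\xi(\tau,s) := \operatorname{card}(\{h_n\}_n\cap[\tau,s])$; $\lvert\cdot\rvert$ denotes Lebesgue measure. A constant $B_d\in[0,1]$ is a duration-bound of $\xi$ if there is a constant $0<\kappa<+\infty$ with $\lvert \Xi(0,t)\rvert\leqslant \kappa + B_d t$ for all $t\geqslant 0$. A constant $B_f\in[0,+\infty)$ is a frequency-bound of $\xi$ if there is an integer $0<\Lambda<+\infty$ with $n_\xi(0,t)\leqslant \Lambda + B_f t$ for all $t\geqslant 0$; if no such finite $B_f$ exists, the frequency-bound is defined to be $+\infty$. $\mathcal{D}(\xi)$ and $\mathcal{F}(\xi)$ denote the sets of all duration-bounds and frequency-bounds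 of $\xi$. $\xi$ is an edge case if (i) $\inf\mathcal{D}(\xi)=1$, or (ii) $\inf\mathcal{F}(\xi)=+\infty$, or (iii) for every $\Gamma\in(0,+\infty)$ there is $n$ with $\tau_n>\Gamma$. DoS estimator: with $B_d(i) := \frac{\lvert \Xi(0,h_i+\tau_i)\rvert}{h_i+\tau_i}$ and $B_f(i) := \frac{i}{h_i}$, $\hat B_d(t) = \epsilon_0$ for $t\in[0,h_\ell+\tau_\ell)$ and $\hat B_d(t) = \max_{\ell\leqslant i\leqslant n}\{\epsilon_0,\ \theta B_d(i)+(1-\theta)\}$ for $t\in[h_n+\tau_n, h_{n+1}+\tau_{n+1})$, $n\geqslant \ell$; $\hat B_f(t) = \epsilon_0$ for $t\in[0,h_\ell)$ and $\hat B_f(t) = \max_{\ell\leqslant i\leqslant n}\{\epsilon_0,\ B_f(i)/\theta\}$ for $t\in[h_n,h_{n+1})$, $n\geqslant\ell$. *)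

(* Defs.v *)
From HB Require Import structures.
From mathcomp Require Import all_boot all_order all_algebra.
From mathcomp Require Import finmap.
From mathcomp Require Import all_classical all_reals all_analysis.
Set Implicit Arguments. Unset Strict Implicit. Unset Printing Implicit Defensive.
Import Order.TTheory GRing.Theory Num.Theory.
Local Open Scope classical_set_scope.
Local Open Scope ring_scope.

(* A DoS sequence is encoded by its length [len] (Some m: m elements,
   None: infinitely many) and two real sequences h, tau, indexed from 1.
   Values of h, tau outside the valid index range are irrelevant
   (the paper's convention h_n = +oo for n > m is realised by never
   using such indices). *)
Definition in_seq (len : option nat) (n : nat) : bool :=
  (0 < n)%N && (if len is Some m then (n <= m)%N else true).

Section DoS.
Variables (R : realType) (len : option nat) (h tau : nat -> R).

Definition DoS_seq : Prop :=
  (in_seq len 1 -> 0 <= h 1) /\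
  (forall n, in_seq len n -> 0 <= tau n) /\
  (forall n, in_seq len n.+1 -> h n + tau n < h n.+1).

Definition Hset (n : nat) : set R := [set h n] `|` `[h n, h n + tau n[.

Definition Xi (a s : R) : set R :=
  [set x | exists2 n, in_seq len n & Hset n x] `&` `[a, s].

Definition hpts (a s : R) : set R :=
  [set x | exists2 n, in_seq len n & x = h n] `&` `[a, s].
Definition n_xi (a s : R) : \bar R :=
  if pselect (finite_set (hpts a s)) then ((#|` fset_set (hpts a s)|)%fset%:R)%:E
  else +oo%E.

Definition DurBounds : set R :=
  [set Bd | 0 <= Bd <= 1 /\ exists2 kappa : R, 0 < kappa &
     forall t : R, 0 <= t -> (lebesgue_measure (Xi 0 t) <= (kappa + Bd * t)%:E)%E].

Definition finFreqBound (Bf : R) : Prop :=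
  0 <= Bf /\ exists2 Lambda : nat, (0 < Lambda)%N &
     forall t : R, 0 <= t -> (n_xi 0 t <= (Lambda%:R + Bf * t)%:E)%E.

Definition FreqBounds : set (\bar R) :=
  if pselect (exists Bf, finFreqBound Bf) then [set Bf%:E | Bf in finFreqBound]
  else [set +oo%E].

Definition edge_case : Prop :=
  inf DurBounds = 1 \/ ereal_inf FreqBounds = +oo%E \/
  (forall Gamma : R, 0 < Gamma -> exists2 n, in_seq len n & Gamma < tau n).

Definition ends (n : nat) : R := h n + tau n.

Definition Bd_i (i : nat) : R := fine (lebesgue_measure (Xi 0 (ends i))) / ends i.
Definition Bf_i (i : nat) : R := i%:R / h i.

(* the index n with t in [h_n+tau_n, h_{n+1}+tau_{n+1}) (upper end +oo if
   n is the last element); 0 if there is none *)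
Definition idx_d (t : R) : nat :=
  xget 0%N [set n | in_seq len n /\ ends n <= t /\ (in_seq len n.+1 -> t < ends n.+1)].
Definition idx_f (t : R) : nat :=
  xget 0%N [set n | in_seq len n /\ h n <= t /\ (in_seq len n.+1 -> t < h n.+1)].

Variables (l : nat) (eps0 theta : R).

Definition Bd_hat (t : R) : R :=
  if (l <= idx_d t)%N then
    \big[Num.max/eps0]_(l <= i < (idx_d t).+1) (theta * Bd_i i + (1 - theta))
  else eps0.

Definition Bf_hat (t : R) : R :=
  if (l <= idx_f t)%N then
    \big[Num.max/eps0]_(l <= i < (idx_f t).+1) (Bf_i i / theta)
  else eps0.
End DoS.

(* Main.v *)
Require Import Defs.
From HB Require Import structures.
From mathcomp Require Import all_boot all_order all_algebra.
From mathcomp Require Import all_classical all_reals all_analysis.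
From mathcomp Require Import lra.
Import Order.TTheory GRing.Theory Num.Theory.
Local Open Scope classical_set_scope.
Local Open Scope ring_scope.
Set Implicit Arguments. Unset Strict Implicit. Unset Printing Implicit Defensive.

Section Aux.
Variables (R : realType) (len : option nat) (h tau : nat -> R).
Hypothesis Hd : DoS_seq len h tau.

Lemma in_seq_le i j : (0 < i)%N -> (i <= j)%N -> in_seq len j -> in_seq len i.
Proof.
rewrite /in_seq => i0 ij /andP[_]; rewrite i0 /=.
by case: len => [m|] // jm; exact: leq_trans ij jm.
Qed.

Lemma tau_ge0 n : in_seq len n -> 0 <= tau n.
Proof. by case: Hd => _ [+ _]; apply. Qed.

Lemma h_le_ends n : in_seq len n -> h n <= ends h tau n.
Proof. by move=> /tau_ge0 t0; rewrite /ends lerDl. Qed.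

Lemma ends_lt_h_aux i k : (0 < i)%N -> in_seq len (i + k).+1 ->
  ends h tau i < h (i + k).+1.
Proof.
move=> i0; elim: k => [|k IH] H.
  by rewrite addn0; case: Hd => _ [_]; apply; rewrite -(addn0 i).
have H1 : in_seq len (i + k).+1 by apply: in_seq_le H => //; rewrite addnS.
apply: (lt_le_trans (IH H1)); apply: ltW.
apply: (le_lt_trans (h_le_ends H1)).
by rewrite addnS; case: Hd => _ [_]; apply; rewrite -addnS.
Qed.

Lemma ends_lt_h i j : (0 < i)%N -> (i < j)%N -> in_seq len j ->
  ends h tau i < h j.
Proof.
move=> i0 ij Hj; have -> : j = (i + (j - i.+1)).+1 by rewrite -addSn subnKC.
apply: ends_lt_h_aux => //; rewrite -addSn subnKC //.
Qed.

Lemma h_lt i j : (0 < i)%N -> (i < j)%N -> in_seq len j -> h i < h j.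
Proof.
move=> i0 ij Hj; apply: le_lt_trans (ends_lt_h i0 ij Hj).
by apply: h_le_ends; apply: in_seq_le Hj => //; exact: ltnW.
Qed.

Lemma h_le i j : (0 < i)%N -> (i <= j)%N -> in_seq len j -> h i <= h j.
Proof.
move=> i0; rewrite leq_eqVlt => /orP[/eqP->//|ij] Hj.
exact/ltW/h_lt.
Qed.

Lemma ends_le i j : (0 < i)%N -> (i <= j)%N -> in_seq len j ->
  ends h tau i <= ends h tau j.
Proof.
move=> i0; rewrite leq_eqVlt => /orP[/eqP->//|ij] Hj.
apply/ltW/(lt_le_trans (ends_lt_h i0 ij Hj)); exact: h_le_ends.
Qed.

Lemma h_ge0 n : in_seq len n -> 0 <= h n.
Proof.
move=> Hn; have n0 : (0 < n)%N by case/andP: Hn.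
have H1 : in_seq len 1 by exact: in_seq_le Hn.
by apply: le_trans (h_le (isT : (0 < 1)%N) n0 Hn); case: Hd => + _; apply.
Qed.

Lemma h_gt0 n : in_seq len n -> (1 < n)%N -> 0 < h n.
Proof.
move=> Hn n1; have H1 : in_seq len 1 by apply: in_seq_le Hn => //; exact: ltnW.
apply: le_lt_trans (ends_lt_h (isT : (0 < 1)%N) n1 Hn).
exact: le_trans (h_ge0 H1) (h_le_ends H1).
Qed.

Lemma ends_gt0 n : in_seq len n -> (1 < n)%N -> 0 < ends h tau n.
Proof. by move=> Hn n1; apply: lt_le_trans (h_gt0 Hn n1) (h_le_ends Hn). Qed.

Lemma ends_ge0 n : in_seq len n -> 0 <= ends h tau n.
Proof. by move=> Hn; apply: le_trans (h_ge0 Hn) (h_le_ends Hn). Qed.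


Lemma bracket (a : nat -> R) k t :
  (0 < k)%N -> (forall i j, (0 < i)%N -> (i <= j)%N -> a i <= a j) ->
  a k <= t -> (exists2 M, (0 < M)%N & t < a M) ->
  exists n, [/\ (k <= n)%N, a n <= t & t < a n.+1].
Proof.
move=> k0 mono akt [M M0 tM].
have kM : (k < M)%N.
  rewrite ltnNge; apply/negP => Mk.
  by have := lt_le_trans tM (le_trans (mono _ _ M0 Mk) akt); rewrite ltxx.
suff gen : forall d j, (k <= j)%N -> a j <= t -> t < a (j + d)%N ->
    exists n, [/\ (k <= n)%N, a n <= t & t < a n.+1].
  by apply: (gen (M - k)%N k) => //; rewrite subnKC // ltnW.
elim => [|d IH] j kj ajt tjd.
  by rewrite addn0 in tjd; have := lt_le_trans tjd ajt; rewrite ltxx.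
case: (leP (a j.+1) t) => [ge|lt]; last by exists j.
by apply: (IH j.+1) => //; [exact: leqW | rewrite addSnnS].
Qed.

Lemma bigmax_ge_idx (e : R) (r : seq nat) F : e <= \big[Num.max/e]_(i <- r) F i.
Proof.
by elim: r => [|x r IH]; rewrite ?big_nil ?big_cons // le_max IH orbT.
Qed.

Lemma bigmax_ge_F (e : R) (r : seq nat) F i : i \in r ->
  F i <= \big[Num.max/e]_(j <- r) F j.
Proof.
elim: r => [//|x r IH]; rewrite inE big_cons le_max => /orP[/eqP->|/IH->].
  by rewrite lexx.
by rewrite orbT.
Qed.

Lemma bigmax_le (e : R) (r : seq nat) F c : e <= c ->
  (forall i, i \in r -> F i <= c) -> \big[Num.max/e]_(j <- r) F j <= c.
Proof.
elim: r => [|x r IH] ec Hc; rewrite ?big_nil ?big_cons // ge_max Hc ?mem_head //=.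
by apply: IH => // i ir; apply: Hc; rewrite inE ir orbT.
Qed.

Definition Pd t n := in_seq len n /\ ends h tau n <= t /\
  (in_seq len n.+1 -> t < ends h tau n.+1).
Definition Pf t n := in_seq len n /\ h n <= t /\
  (in_seq len n.+1 -> t < h n.+1).

Lemma idx_d_spec t : idx_d len h tau t = 0%N \/ Pd t (idx_d len h tau t).
Proof.
rewrite /idx_d; have [ex|nex] := pselect (exists n, Pd t n).
  by right; exact: (xgetPex 0%N ex).
by left; apply: xgetPN => n Pn; apply: nex; exists n.
Qed.

Lemma idx_f_spec t : idx_f len h t = 0%N \/ Pf t (idx_f len h t).
Proof.
rewrite /idx_f; have [ex|nex] := pselect (exists n, Pf t n).
  by right; exact: (xgetPex 0%N ex).
by left; apply: xgetPN => n Pn; apply: nex; exists n.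
Qed.

Lemma idx_d_ge t i : in_seq len i -> ends h tau i <= t -> (exists n, Pd t n) ->
  (i <= idx_d len h tau t)%N.
Proof.
move=> Hi it ex; have [Hn [_ Hn1]] : Pd t (idx_d len h tau t) by exact: (xgetPex 0%N ex).
set n := idx_d len h tau t in Hn Hn1 *.
rewrite leqNgt; apply/negP => ni.
have H1 : in_seq len n.+1 by exact: in_seq_le Hi.
have := lt_le_trans (Hn1 H1) (le_trans (ends_le (ltn0Sn n) ni Hi) it).
by rewrite ltxx.
Qed.

Lemma idx_f_ge t i : in_seq len i -> h i <= t -> (exists n, Pf t n) ->
  (i <= idx_f len h t)%N.
Proof.
move=> Hi it ex; have [Hn [_ Hn1]] : Pf t (idx_f len h t) by exact: (xgetPex 0%N ex).
set n := idx_f len h t in Hn Hn1 *.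
rewrite leqNgt; apply/negP => ni.
have H1 : in_seq len n.+1 by exact: in_seq_le Hi.
have := lt_le_trans (Hn1 H1) (le_trans (h_le (ltn0Sn n) ni Hi) it).
by rewrite ltxx.
Qed.

Definition mu t := lebesgue_measure (Xi len h tau 0 t).

Lemma Xi_meas a s : measurable (Xi len h tau a s).
Proof.
rewrite /Xi; apply: measurableI; last exact: measurable_itv.
have -> : [set x | exists2 n, in_seq len n & Hset h tau n x] =
    \bigcup_(n in [set n | in_seq len n]) Hset h tau n.
  by apply/seteqP; split=> x [n Hn Hx]; exists n.
apply: bigcup_measurable => n _; apply: measurableU.
  exact: measurable_set1.
exact: measurable_itv.
Qed.

Lemma leb_cc (a b : R) : a <= b -> lebesgue_measure (`[a, b] : set R) = (b - a)%:E.
Proof.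
move=> ab; rewrite lebesgue_measure_itv/= lte_fin; case: ifPn => [_|].
  by rewrite EFinB.
rewrite -leNgt => ba; have -> : a = b by apply/le_anti; rewrite ab ba.
by rewrite subrr.
Qed.

Lemma leb_co (a b : R) : a <= b -> lebesgue_measure (`[a, b[ : set R) = (b - a)%:E.
Proof.
move=> ab; rewrite lebesgue_measure_itv/= lte_fin; case: ifPn => [_|].
  by rewrite EFinB.
rewrite -leNgt => ba; have -> : a = b by apply/le_anti; rewrite ab ba.
by rewrite subrr.
Qed.

Lemma mu_ge0 t : (0 <= mu t)%E.
Proof. exact: measure_ge0. Qed.

Lemma mu_sub_cc t K : 0 <= K -> Xi len h tau 0 t `<=` `[0, K] -> (mu t <= K%:E)%E.
Proof.
move=> K0 sub; have E := leb_cc K0; rewrite subr0 in E; rewrite -E.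
apply: le_measure => //; rewrite inE; [exact: Xi_meas | exact: measurable_itv].
Qed.

Lemma mu_le t : 0 <= t -> (mu t <= t%:E)%E.
Proof. by move=> t0; apply: mu_sub_cc => // x []. Qed.

Lemma mu_split n t : (0 < n)%N -> in_seq len n.+1 -> ends h tau n <= t ->
  t < ends h tau n.+1 -> (mu t <= mu (ends h tau n) + (tau n.+1)%:E)%E.
Proof.
move=> n0 Hn1 nt tn1.
have Hn : in_seq len n by exact: in_seq_le Hn1.
have sub : Xi len h tau 0 t `<=`
    Xi len h tau 0 (ends h tau n) `|` `[h n.+1, ends h tau n.+1[.
  move=> x [[k Hk Hx]] /=; rewrite in_itv /= => /andP[x0 xt].
  have k0 : (0 < k)%N by case/andP: Hk.
  have [hkx xek] : h k <= x /\ x <= ends h tau k.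
    case: Hx => [/= ->|/=]; first by rewrite lexx h_le_ends.
    by rewrite in_itv /= => /andP[-> /ltW].
  case: (ltngtP k n.+1) => [kn|kn|kn].
  - left; split; first by exists k.
    by rewrite /= in_itv /= x0 /= (le_trans xek) // ends_le.
  - exfalso; have A := ends_lt_h (ltn0Sn n) kn Hk; lra.
  - right; rewrite /= in_itv /= -kn hkx /=.
    rewrite kn; lra.
rewrite /mu; apply: (@le_trans _ _ (lebesgue_measure
   (Xi len h tau 0 (ends h tau n) `|` `[h n.+1, ends h tau n.+1[))).
  apply: le_measure => //; rewrite inE; first exact: Xi_meas.
  by apply: measurableU; [exact: Xi_meas | exact: measurable_itv].
apply: (le_trans (measureU2 _ _ _)); [exact: Xi_meas | exact: measurable_itv |].
apply: leeD; first exact: lexx.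
change (lebesgue_measure (`[h n.+1, ends h tau n.+1[ : set R) <= (tau n.+1)%:E)%E.
rewrite leb_co; last exact: h_le_ends.
by rewrite /ends addrAC subrr add0r.
Qed.

Lemma mu_fin m t : len = Some m -> (mu t <= (Num.max 0 (ends h tau m))%:E)%E.
Proof.
move=> Hlen; apply: mu_sub_cc; first by rewrite le_max lexx.
move=> x [[k Hk Hx]] /=; rewrite !in_itv /= => /andP[x0 xt].
rewrite x0 /=.
have k0 : (0 < k)%N by case/andP: Hk.
have km : (k <= m)%N by move: Hk; rewrite /in_seq Hlen => /andP[].
have Hm : in_seq len m by rewrite /in_seq Hlen leqnn andbT (leq_trans k0 km).
have xek : x <= ends h tau k.
  case: Hx => [/= ->|/=]; first by rewrite h_le_ends.
  by rewrite in_itv /= => /andP[_ /ltW].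
by rewrite le_max (le_trans xek (ends_le k0 km Hm)) orbT.
Qed.

Lemma nxi_ub t k : (forall n, in_seq len n -> h n <= t -> (n <= k)%N) ->
  (n_xi len h 0 t <= (k%:R)%:E)%E.
Proof.
move=> Hk.
have sub : hpts len h 0 t `<=` (fun j => h j.+1) @` `I_k.
  move=> x [[n Hn ->]] /=; rewrite in_itv /= => /andP[_ hnt].
  have n0 : (0 < n)%N by case/andP: Hn.
  exists n.-1; last by rewrite prednK.
  by rewrite /= prednK // Hk.
have fin : finite_set (hpts len h 0 t).
  exact: (sub_finite_set sub (finite_image _ (finite_II k))).
rewrite /n_xi; case: pselect => [fn|/(_ fin)//]; rewrite lee_fin ler_nat.
apply: geq_card_fset_set.
exact: card_le_trans (subset_card_le sub) (card_image_le _ _).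
Qed.

Lemma nxi_lb n : in_seq len n -> ((n%:R)%:E <= n_xi len h 0 (h n))%E.
Proof.
move=> Hn; rewrite /n_xi; case: pselect => [fin|nf]; last by rewrite leey.
rewrite lee_fin ler_nat; apply: leq_card_fset_set => //.
have inj : {in `I_n &, injective (fun j => h j.+1)}.
  move=> i j; rewrite !inE /= => ilt jlt eq.
  case: (ltngtP i j) => // ij; exfalso.
  - have := h_lt (ltn0Sn i) (ij : (i.+1 < j.+1)%N) (in_seq_le (ltn0Sn j) jlt Hn).
    by rewrite eq ltxx.
  - have := h_lt (ltn0Sn j) (ij : (j.+1 < i.+1)%N) (in_seq_le (ltn0Sn i) ilt Hn).
    by rewrite eq ltxx.
rewrite -(card_le_eql (inj_card_eq inj)).
apply: subset_card_le => x [j /= jn <-].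
have Hj : in_seq len j.+1 by exact: in_seq_le Hn.
split; first by exists j.+1.
by rewrite /= in_itv /= h_ge0 //= h_le.
Qed.

Lemma mu_fine t : 0 <= t -> mu t = (fine (mu t))%:E.
Proof.
move=> t0; rewrite fineK // ge0_fin_numE ?mu_ge0 //.
exact: le_lt_trans (mu_le t0) (ltry _).
Qed.

Lemma fmu_bounds t : 0 <= t -> 0 <= fine (mu t) <= t.
Proof.
move=> t0; have := mu_ge0 t; have := mu_le t0.
by rewrite (mu_fine t0) !lee_fin => -> ->.
Qed.

Lemma Bd_i_range i : in_seq len i -> (1 < i)%N -> 0 <= Bd_i len h tau i <= 1.
Proof.
move=> Hi i1; have e0 := ends_gt0 Hi i1.
have /andP[f0 f1] := fmu_bounds (ltW e0).
rewrite /Bd_i -/(mu _) divr_ge0 ?(ltW e0) //= ler_pdivrMr // mul1r //.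
Qed.

Lemma Bd_hat_range l eps0 theta t : (2 <= l)%N -> 0 < eps0 < 1 -> 0 < theta < 1 ->
  0 <= Bd_hat len h tau l eps0 theta t <= 1.
Proof.
move=> l2 /andP[e0 e1] /andP[t0 t1]; rewrite /Bd_hat; case: ifPn => [lidx|_]; last first.
  by rewrite !ltW.
have Hidx : in_seq len (idx_d len h tau t).
  case: (idx_d_spec t) => [E|[]//]; move: lidx; rewrite E leqn0 => /eqP l0.
  by rewrite l0 in l2.
apply/andP; split; first exact: le_trans (ltW e0) (bigmax_ge_idx _ _ _).
apply: bigmax_le; first exact: ltW.
move=> i; rewrite mem_index_iota => /andP[li iidx].
have i1 : (1 < i)%N by exact: leq_trans l2 li.
have Hi : in_seq len i by apply: in_seq_le Hidx; [exact: ltnW | rewrite -ltnS].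
have /andP[b0 b1] := Bd_i_range Hi i1.
nra.
Qed.

Lemma Bd_hat_ge l eps0 theta t i : (l <= i)%N -> in_seq len i -> ends h tau i <= t ->
  (exists n, Pd t n) ->
  theta * Bd_i len h tau i + (1 - theta) <= Bd_hat len h tau l eps0 theta t.
Proof.
move=> li Hi it ex; have ii := idx_d_ge Hi it ex.
rewrite /Bd_hat ifT ?(leq_trans li ii) //.
apply: (@bigmax_ge_F eps0 _ (fun i => theta * Bd_i len h tau i + (1 - theta))).
by rewrite mem_index_iota li ltnS ii.
Qed.

Lemma Bf_hat_ge0 l eps0 theta t : eps0 <= Bf_hat len h l eps0 theta t.
Proof. by rewrite /Bf_hat; case: ifP => _; [exact: bigmax_ge_idx | exact: lexx]. Qed.

Lemma Bf_hat_ge l eps0 theta t i : (l <= i)%N -> in_seq len i -> h i <= t ->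
  (exists n, Pf t n) ->
  Bf_i h i / theta <= Bf_hat len h l eps0 theta t.
Proof.
move=> li Hi it ex; have ii := idx_f_ge Hi it ex.
rewrite /Bf_hat ifT ?(leq_trans li ii) //.
apply: (@bigmax_ge_F eps0 _ (fun i => Bf_i h i / theta)).
by rewrite mem_index_iota li ltnS ii.
Qed.

End Aux.

Section Main.
Variables (R : realType) (len : option nat) (h tau : nat -> R).
Hypothesis Hd : DoS_seq len h tau.
Variables (l : nat) (eps0 theta : R).
Hypotheses (l2 : (2 <= l)%N) (He : 0 < eps0 < 1) (Ht : 0 < theta < 1).

Lemma fin_case m : len = Some m -> forall t,
  DurBounds len h tau (Bd_hat len h tau l eps0 theta t) /\
  FreqBounds len h ((Bf_hat len h l eps0 theta t)%:E).
Proof.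
move=> Hlen t; split.
  have /andP[b0 b1] := Bd_hat_range Hd t l2 He Ht.
  split; first by rewrite b0 b1.
  have K0 : 0 <= Num.max 0 (ends h tau m) by rewrite le_max lexx.
  exists (Num.max 0 (ends h tau m) + 1); first by lra.
  move=> s s0; apply: le_trans (mu_fin Hd s Hlen) _; rewrite lee_fin.
  have := mulr_ge0 b0 s0; lra.
have B0 : 0 <= Bf_hat len h l eps0 theta t.
  by apply: le_trans (Bf_hat_ge0 _ _ _ _ _ _); case/andP: He => /ltW.
have FB : finFreqBound len h (Bf_hat len h l eps0 theta t).
  split => //; exists m.+1 => // s s0.
  apply: (le_trans (nxi_ub (k := m) _)).
    by move=> n; rewrite /in_seq Hlen => /andP[].
  rewrite lee_fin -addn1 natrD; have := mulr_ge0 B0 s0; lra.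
rewrite /FreqBounds; case: pselect => [ex|nex]; first by exists (Bf_hat len h l eps0 theta t).
by exfalso; apply: nex; exists (Bf_hat len h l eps0 theta t).
Qed.


Lemma inf_case : len = None -> ~ edge_case len h tau ->
  exists T : R, 0 <= T /\
    forall t : R, T <= t ->
      DurBounds len h tau (Bd_hat len h tau l eps0 theta t) /\
      FreqBounds len h ((Bf_hat len h l eps0 theta t)%:E).
Proof.
move=> Hlen nedge.
have inS : forall n, (0 < n)%N -> in_seq len n by move=> n n0; rewrite /in_seq Hlen n0.
clear Hlen.
have l0 : (0 < l)%N by exact: ltnW.
have Hinf : inf (DurBounds len h tau) != 1.
  by apply/eqP => E; apply: nedge; left.
have Hfreq : ereal_inf (FreqBounds len h) != +oo%E.
  by apply/eqP => E; apply: nedge; right; left.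
have [G G0 HG] : exists2 G, 0 < G & forall n, in_seq len n -> tau n <= G.
  apply: contrapT => nG; apply: nedge; right; right => G G0.
  apply: contrapT => nn; apply: nG; exists G => // n Hn.
  by rewrite leNgt; apply/negP => Gt; apply: nn; exists n.
have [Bf0 [Bf0ge0 [L0 L00 HL0]]] : exists Bf, finFreqBound len h Bf.
  apply: contrapT => nex; move: Hfreq; rewrite /FreqBounds.
  by case: pselect => [ex|nex']; [exfalso; exact: nex ex | rewrite ereal_inf1 eqxx].
clear Hfreq.
have hlb : forall n, (0 < n)%N -> n%:R <= L0%:R + Bf0 * h n.
  move=> n n0; have := le_trans (nxi_lb Hd (inS n n0)) (HL0 _ (h_ge0 Hd (inS n n0))).
  by rewrite lee_fin.
have hmono : forall i j, (0 < i)%N -> (i <= j)%N -> h i <= h j.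
  by move=> i j i0 ij; exact: (h_le Hd i0 ij (inS j (leq_trans i0 ij))).
have emono : forall i j, (0 < i)%N -> (i <= j)%N -> ends h tau i <= ends h tau j.
  by move=> i j i0 ij; exact: (ends_le Hd i0 ij (inS j (leq_trans i0 ij))).
have hunb : forall t, exists2 M, (0 < M)%N & t < h M.
  move=> t; apply: contrapT => nM.
  pose N := (Num.Def.trunc (L0%:R + Bf0 * `|t|)).+1.
  have hN : h N <= t by rewrite leNgt; apply/negP => tN; apply: nM; exists N.
  have H1 := hlb N isT; have H2 := truncnS_gt (L0%:R + Bf0 * `|t|).
  have H3 : Bf0 * h N <= Bf0 * `|t| by apply: ler_wpM2l => //; exact: le_trans hN (ler_norm t).
  rewrite -/N in H2; clearbody N; lra.
have eunb : forall t, exists2 M, (0 < M)%N & t < ends h tau M.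
  move=> t; have [M M0 tM] := hunb t; exists M => //.
  exact: lt_le_trans tM (h_le_ends Hd (inS M M0)).
have brd : forall k t, (0 < k)%N -> ends h tau k <= t ->
    exists n, [/\ (k <= n)%N, ends h tau n <= t & t < ends h tau n.+1].
  by move=> k t k0 kt; exact: bracket k0 emono kt (eunb t).
have brf : forall k t, (0 < k)%N -> h k <= t ->
    exists n, [/\ (k <= n)%N, h n <= t & t < h n.+1].
  by move=> k t k0 kt; exact: bracket k0 hmono kt (hunb t).
have D1 : DurBounds len h tau 1.
  split; first by rewrite ler01 lexx.
  exists 1 => // t t0; rewrite mul1r; apply: le_trans (mu_le len h tau t0) _.
  by rewrite lee_fin lerDr ler01.
have Dlb : lbound (DurBounds len h tau) 0 by move=> x [/andP[x0 _] _].
have [B0 [/andP[B0ge0 _] [k0 k00 Hk0]] B01] : exists2 B, DurBounds len h tau B & B < 1.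
  have hl : has_lbound (DurBounds len h tau) by exists 0.
  have infle : inf (DurBounds len h tau) <= 1 by exact: ge_inf hl _ D1.
  have inf1 : inf (DurBounds len h tau) < 1 by rewrite lt_neqAle Hinf infle.
  have hi : has_inf (DurBounds len h tau) by split; [exists 1 | exact: hl].
  have ep0 : 0 < 1 - inf (DurBounds len h tau) by rewrite subr_gt0.
  have [e De elt] := inf_adherent ep0 hi.
  by exists e => //; lra.
have [M M0 hM] := hunb (2 * k0 / (1 - B0)).
pose N0 := maxn M l.
have N0l : (l <= N0)%N by exact: leq_maxr.
have MN0 : (M <= N0)%N by exact: leq_maxl.
have N01 : (1 < N0)%N by exact: leq_trans l2 N0l.
have N00 : (0 < N0)%N by exact: ltnW.
have eN0pos : 0 < ends h tau N0 by exact: (ends_gt0 Hd (inS N0 N00) N01).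
have eN0 : 2 * k0 <= (1 - B0) * ends h tau N0.
  have hMe : h M <= ends h tau N0.
    exact: le_trans (hmono _ _ M0 MN0) (h_le_ends Hd (inS N0 N00)).
  move: hM; rewrite ltr_pdivrMr ?subr_gt0 // => hM.
  have : h M * (1 - B0) <= (1 - B0) * ends h tau N0.
    by rewrite mulrC; apply: ler_wpM2l => //; rewrite subr_ge0 ltW.
  lra.
pose c := (1 + B0) / 2.
have Bdc : forall i, (N0 <= i)%N -> Bd_i len h tau i <= c.
  move=> i Ni; have i1 : (1 < i)%N by exact: leq_trans N01 Ni.
  have Hi := inS i (ltnW i1); have e0 := ends_gt0 Hd Hi i1.
  have eNi : ends h tau N0 <= ends h tau i by exact: emono.
  rewrite /Bd_i -/(mu _ _ _ _) ler_pdivrMr //.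
  have : (mu len h tau (ends h tau i) <= (k0 + B0 * ends h tau i)%:E)%E.
    exact: Hk0 _ (ltW e0).
  rewrite (mu_fine len h tau (ltW e0)) lee_fin => Hm.
  have : (1 - B0) * ends h tau N0 <= (1 - B0) * ends h tau i.
    by apply: ler_wpM2l => //; rewrite subr_ge0 ltW.
  rewrite /c; lra.
pose Ed := [set Bd_i len h tau i | i in [set i | (N0 <= i)%N]].
have Ed0 : Ed !=set0 by exists (Bd_i len h tau N0); rewrite /Ed; exists N0 => /=.
have Edub : ubound Ed c by move=> y; rewrite /Ed => -[j Nj <-]; exact: Bdc.
have hsd : has_sup Ed by split => //; exists c.
pose Sd := sup Ed.
have Sd_ub : forall i, (N0 <= i)%N -> Bd_i len h tau i <= Sd.
  by move=> i Ni; apply: (sup_upper_bound hsd); rewrite /Ed; exists i => /=.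
have Sdc : Sd <= c by exact: ge_sup Ed0 Edub.
have Sd0 : 0 <= Sd.
  apply: le_trans (Sd_ub N0 (leqnn _)).
  by case/andP: (Bd_i_range Hd (inS N0 N00) N01).
have [t0 t1] : 0 < theta /\ theta < 1 by case/andP: Ht.
pose ep := (1 - theta) * (1 - c) / theta.
have ep0 : 0 < ep.
  rewrite /ep divr_gt0 // mulr_gt0 // subr_gt0 // /c; lra.
have [y Ey yi] := sup_adherent ep0 hsd.
move: Ey yi; rewrite /Ed => -[i Ni <-] yi.
rewrite -/Sd in yi.
have Mi : Sd <= theta * Bd_i len h tau i + (1 - theta).
  have E1 : theta * ep = (1 - theta) * (1 - c).
    by rewrite /ep mulrC divfK // gt_eqF.
  have H1 : theta * (Sd - ep) <= theta * Bd_i len h tau i.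
    by apply: ler_wpM2l; [exact: ltW | exact: ltW].
  have H2 : (1 - theta) * Sd <= (1 - theta) * c.
    by apply: ler_wpM2l => //; rewrite subr_ge0 ltW.
  lra.
have DB : forall B, Sd <= B <= 1 -> DurBounds len h tau B.
  move=> B /andP[SB B1]; split; first by rewrite B1 (le_trans Sd0 SB).
  exists (ends h tau N0 + G + 1); first by lra.
  move=> s s0; case: (ltP s (ends h tau N0)) => [sN|Ns].
    apply: le_trans (mu_le len h tau s0) _; rewrite lee_fin.
    have := mulr_ge0 (le_trans Sd0 SB) s0; lra.
  have [n [Nn ens sen]] := brd N0 s N00 Ns.
  have n1 : (1 < n)%N by exact: leq_trans N01 Nn.
  have n0 : (0 < n)%N by exact: ltnW.
  have Hn := inS n n0; have e0n := ends_gt0 Hd Hn n1.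
  apply: le_trans (mu_split Hd n0 (inS n.+1 isT) ens sen) _.
  rewrite (mu_fine len h tau (ltW e0n)) -EFinD lee_fin.
  have -> : fine (mu len h tau (ends h tau n)) = Bd_i len h tau n * ends h tau n.
    by rewrite /Bd_i -/(mu _ _ _ _) divfK // gt_eqF.
  have /andP[bn0 _] := Bd_i_range Hd Hn n1.
  have H1 : Bd_i len h tau n * ends h tau n <= B * s.
    apply: ler_pM => //; first exact: ltW.
    exact: le_trans (Sd_ub n Nn) SB.
  have H2 := HG n.+1 (inS n.+1 isT).
  lra.
have l1 : (1 < l)%N by exact: l2.
have hl0 : 0 < h l by exact: (h_gt0 Hd (inS l l0) l1).
pose U := L0%:R / h l + Bf0.
have BfU : forall k, (l <= k)%N -> Bf_i h k <= U.
  move=> k li; have i0 : (0 < k)%N by exact: leq_trans l0 li.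
  have hli : h l <= h k by exact: hmono.
  have hi0 : 0 < h k by exact: lt_le_trans hl0 hli.
  rewrite /Bf_i ler_pdivrMr // /U mulrDl.
  have H1 := hlb k i0.
  have E1 : L0%:R / h l * h l = L0%:R by rewrite divfK // gt_eqF.
  have H2 : L0%:R / h l * h l <= L0%:R / h l * h k.
    by apply: ler_wpM2l => //; rewrite divr_ge0 // ltW.
  lra.
pose Ef := [set Bf_i h i | i in [set i | (l <= i)%N]].
have Ef0 : Ef !=set0 by exists (Bf_i h l); rewrite /Ef; exists l => /=.
have hsf : has_sup Ef by split => //; exists U => z; rewrite /Ef => -[k lk <-]; exact: BfU.
pose Sf := sup Ef.
have Sf_ub : forall k, (l <= k)%N -> Bf_i h k <= Sf.
  by move=> k li; apply: (sup_upper_bound hsf); rewrite /Ef; exists k => /=.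
have Sf0 : 0 < Sf.
  apply: lt_le_trans (Sf_ub l (leqnn _)).
  by rewrite /Bf_i divr_gt0 // ltr0n.
have epf : 0 < (1 - theta) * Sf by rewrite mulr_gt0 // subr_gt0.
have [yf Ey yj] := sup_adherent epf hsf.
move: Ey yj; rewrite /Ef => -[j lj <-] yj.
rewrite -/Sf in yj.
have Mj : Sf <= Bf_i h j / theta.
  by rewrite ler_pdivlMr //; lra.
have FB : forall B, Sf <= B -> finFreqBound len h B.
  move=> B SB; have B0' : 0 <= B by exact: le_trans (ltW Sf0) SB.
  split => //; exists l => // s s0.
  case: (ltP s (h l)) => [sl|ls].
    apply: (le_trans (nxi_ub (k := l) _)).
      move=> n Hn hns; rewrite leqNgt; apply/negP => ln.
      have := hmono l n l0 (ltnW ln); lra.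
    rewrite lee_fin; have := mulr_ge0 B0' s0; lra.
  have [n [ln hns snh]] := brf l s l0 ls.
  have n0 : (0 < n)%N by exact: leq_trans l0 ln.
  have n1 : (1 < n)%N by exact: leq_trans l1 ln.
  apply: (le_trans (nxi_ub (k := n) _)).
    move=> n' Hn' hn's; rewrite leqNgt; apply/negP => nn'.
    have := hmono n.+1 n' isT nn'; lra.
  rewrite lee_fin.
  have hn0 := h_gt0 Hd (inS n n0) n1.
  have E : n%:R = Bf_i h n * h n by rewrite /Bf_i divfK // gt_eqF.
  have H1 : Bf_i h n * h n <= B * s.
    apply: ler_pM; [by rewrite /Bf_i divr_ge0 // ltW | exact: ltW |
      exact: (le_trans (Sf_ub n ln) SB) | exact: hns].
  have : (0 : R) <= l%:R by [].
  lra.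
have FBt : forall B, Sf <= B -> FreqBounds len h B%:E.
  move=> B SB; rewrite /FreqBounds; case: pselect => [ex|nex].
    by exists B => //; exact: FB.
  by exfalso; apply: nex; exists Bf0; split => //; exists L0.
have Hi : in_seq len i by exact: (inS i (leq_trans N00 Ni)).
have Hj : in_seq len j by exact: (inS j (leq_trans l0 lj)).
exists (Num.max (ends h tau i) (h j)); split.
  by rewrite le_max (ends_ge0 Hd Hi).
move=> t; rewrite ge_max => /andP[it jt]; split.
  apply: DB; apply/andP; split; last by case/andP: (Bd_hat_range Hd t l2 He Ht).
  have [n [Nn ens sen]] := brd i t (leq_trans N00 Ni) it.
  have Pn : exists n, Pd len h tau t n.
    exists n; split; first exact: (inS n (leq_trans (leq_trans N00 Ni) Nn)).
    by split => // _.
  exact: (le_trans Mi (Bd_hat_ge Hd eps0 theta (leq_trans N0l Ni) Hi it Pn)).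
have [n [jn hns snh]] := brf j t (leq_trans l0 lj) jt.
have Pn : exists n, Pf len h t n.
  exists n; split; first exact: (inS n (leq_trans (leq_trans l0 lj) jn)).
  by split => // _.
apply: FBt; exact: (le_trans Mj (Bf_hat_ge Hd eps0 theta lj Hj jt Pn)).
Qed.

End Main.

Unset Implicit Arguments.
Set Strict Implicit.

Theorem theorem1 (R : realType) (len : option nat) (h tau : nat -> R)
  (l : nat) (eps0 theta : R) :
  DoS_seq len h tau -> ~ edge_case len h tau ->
  (2 <= l)%N -> 0 < eps0 < 1 -> 0 < theta < 1 ->
  exists T : R, 0 <= T /\
    forall t : R, T <= t ->
      DurBounds len h tau (Bd_hat len h tau l eps0 theta t) /\
      FreqBounds len h ((Bf_hat len h l eps0 theta t)%:E).
Proof.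
move=> Hd nedge l2 He Ht.
case E : len => [m|].
  rewrite -E; exists 0; split => // t _; exact: (fin_case Hd l2 He Ht E t).
rewrite -E; exact: (inf_case Hd l2 He Ht E nedge).
Qed.
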